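(* Let $d_0<d_1<\cdots$ be the increasing enumeration of $\{m\ge1:\ c_m=0\}$ and $z_n=\left(\frac{d_{4n}+1}{4}-n\right)\bmod 2$ for $n\ge0$. Then the sequence $(z_n)_{n\ge0}$ is not $2$-automatic.
   Context: For $n\in\mathbb{N}$ let $s_2(n)$ be the sum of the binary digits of $n$ and $t_n=s_2(n)\bmod 2$ (the Prouhet–Thue–Morse sequence). Let $F(X)=\sum_{n\ge1}t_nX^n\in\mathbb{F}_2[[X]]$ and let $G(X)=\sum_{n\ge1}c_nX^n\in\mathbb{F}_2[[X]]$ be its compositional inverse, i.e. $F(G(X))=G(F(X))=X$. The $c_n$ are identified with integers in $\{0,1\}$. The sequence $(d_n)$ is indexed from $0$, so $d_0=3$. A sequence $(u_n)$ is $k$-automatic if $u_n$ is the output of a deterministic finite automaton with output reading the base-$k$ expansion of $n$; equivalently its $k$-kernel $\{(u_{k^an+b})_{n}:\ a\ge0,\ 0\le b<k^a\}$ is finite. *)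

(* Defs.v *)
From HB Require Import structures.
From mathcomp Require Import all_boot all_order all_algebra.
Set Implicit Arguments. Unset Strict Implicit. Unset Printing Implicit Defensive.
Import GRing.Theory.
Local Open Scope ring_scope.

(* Sum of binary digits: bit i of n is odd (n %/ 2^i); bits i > n vanish. *)
Definition s2 (n : nat) : nat := (\sum_(i < n.+1) odd (n %/ 2 ^ i))%N.

Definition tm (n : nat) : bool := odd (s2 n).

(* Truncation of F(X) = sum_{n>=1} t_n X^n in F_2[[X]] to degree <= N. *)
Definition Ftrunc (N : nat) : {poly 'F_2} :=
  \poly_(i < N.+1) (((0 < i)%N && tm i)%:R : 'F_2).

Definition Gtrunc (c : nat -> 'F_2) (N : nat) : {poly 'F_2} :=
  \poly_(i < N.+1) c i.

(* G = sum_{n>=1} c_n X^n is the compositional inverse of F in F_2[[X]]: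
   c_0 = 0 and F(G(X)) = G(F(X)) = X coefficientwise.  Since both series have
   zero constant term, the coefficient of X^n (n <= N) of the composition
   only depends on the truncations to degree N. *)
Definition is_comp_inverse_of_TM (c : nat -> 'F_2) : Prop :=
  c 0%N = 0 /\
  forall N n : nat, (n <= N)%N ->
    ((Ftrunc N \Po Gtrunc c N)`_n = (n == 1%N)%:R) /\
    ((Gtrunc c N \Po Ftrunc N)`_n = (n == 1%N)%:R).

Definition is_increasing_enum_of_zeros (c : nat -> 'F_2) (d : nat -> nat) : Prop :=
  (forall n, (d n < d n.+1)%N) /\
  (forall m : nat, ((1 <= m)%N /\ c m = 0) <-> exists n, d n = m).

Definition zseq (d : nat -> nat) (n : nat) : int :=
  ((Posz ((d (4 * n)%N + 1) %/ 4)%N - Posz n) %% 2)%Z.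

(* k-automatic via finiteness of the k-kernel
   {(u_{k^a n + b})_n : a >= 0, 0 <= b < k^a}. *)
Definition automatic (T : Type) (k : nat) (u : nat -> T) : Prop :=
  exists s : seq (nat -> T),
    forall a b : nat, (b < k ^ a)%N ->
      exists2 i, (i < size s)%N &
        forall n, u (k ^ a * n + b)%N = nth u s i n.

(* Main.v *)
Require Import Defs.
From HB Require Import structures.
From mathcomp Require Import all_boot all_order all_algebra.
From mathcomp Require Import zify ring lra.
Set Implicit Arguments. Unset Strict Implicit. Unset Printing Implicit Defensive.

Local Close Scope ring_scope.

Fixpoint inDf (f x : nat) : bool :=
  if f is f'.+1 then (x %% 4 <= 1) && inDf f' (x %/ 4) else true.
Definition inD x := inDf x x.

Lemma inDf0 f : inDf f 0.
Proof. by elim: f => //= f ->. Qed.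

Lemma inDfS f x : x <= f -> inDf f.+1 x = inDf f x.
Proof.
elim: f x => [|f IH] x hx.
  by move: hx; rewrite leqn0 => /eqP ->.
rewrite -[inDf f.+2 x]/((x %% 4 <= 1) && inDf f.+1 (x %/ 4)) -[inDf f.+1 x]/((x %% 4 <= 1) && inDf f (x %/ 4)) IH //.
case: x hx => [|x] hx; first by rewrite div0n.
have: x.+1 %/ 4 < x.+1 by rewrite ltn_Pdiv.
lia.
Qed.

Lemma inDf_ge f x : x <= f -> inDf f x = inD x.
Proof.
move=> h; rewrite -(subnK h).
elim: (f - x) => [|k IH] //=.
rewrite -IH; exact: (inDfS (leq_addl k x)).
Qed.

Lemma inD0 : inD 0. Proof. by []. Qed.

Lemma inD4 y r : r < 4 -> inD (4 * y + r) = (r <= 1) && inD y.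
Proof.
move=> hr.
case E: (4 * y + r) => [|f].
  have -> : y = 0 by lia. have -> : r = 0 by lia. by [].
rewrite /inD /= -E.
have -> : (4 * y + r) %% 4 = r by lia.
have -> : (4 * y + r) %/ 4 = y by lia.
by rewrite inDf_ge //; lia.
Qed.

Definition R (w : nat) : nat := \sum_(y < w) inD y.

Lemma RS w : R w.+1 = R w + inD w.
Proof. by rewrite /R big_ord_recr. Qed.

Lemma R4 y : R (4 * y) = 2 * R y.
Proof.
elim: y => [|y IH]; first by rewrite /R big_ord0.
have -> : 4 * y.+1 = (4 * y).+4 by lia.
rewrite !RS IH.
have h0 : inD (4 * y) = inD y by rewrite -[4 * y]addn0 inD4.
have h1 : inD (4 * y).+1 = inD y by rewrite -addn1 inD4.
have h2 : inD (4 * y).+2 = false by rewrite -addn2 inD4.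
have h3 : inD (4 * y).+3 = false by rewrite -addn3 inD4.
rewrite h0 h1 h2 h3; lia.
Qed.

Lemma R4r y r : r < 4 -> R (4 * y + r) = 2 * R y + (if r == 0 then 0 else if r == 1 then (inD y : nat) else 2 * inD y).
Proof.
move=> hr.
have h0 : inD (4 * y) = inD y by rewrite -[4 * y]addn0 inD4.
have h1 : inD (4 * y).+1 = inD y by rewrite -addn1 inD4.
have h2 : inD (4 * y).+2 = false by rewrite -addn2 inD4.
case: r hr => [|[|[|[|r]]]] // _.
- by rewrite addn0 R4 addn0.
- by rewrite addn1 RS R4 h0.
- by rewrite addn2 !RS R4 h0 h1 /=; lia.
- by rewrite addn3 !RS R4 h0 h1 h2 /=; lia.
Qed.

Lemma R_le w : R w <= w.
Proof. elim: w => [|w IH]; first by rewrite /R big_ord0. rewrite RS; case: (inD w); lia. Qed.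

Lemma R_odd u : odd (R u) -> exists y, u = 4 * y + 1 /\ inD y.
Proof.
have -> : u = 4 * (u %/ 4) + u %% 4 by lia.
have : u %% 4 < 4 by lia.
move: (u %% 4) (u %/ 4) => r y hr.
rewrite R4r //.
case: r hr => [|[|[|[|r]]]] // _ /=.
- by rewrite addn0 oddM.
- move=> h; exists y; split => //; move: h; rewrite oddD oddM /=; by case: (inD y).
- by rewrite oddD !oddM.
- by rewrite oddD !oddM.
Qed.

Lemma R_pow j : R (4 ^ j) = 2 ^ j.
Proof. elim: j => [|j IH]; first by rewrite /R big_ord1. by rewrite expnS R4 IH expnS. Qed.

Lemma inD_pow j : inD (4 ^ j).
Proof. elim: j => [|j IH] //. by rewrite expnS -[4 * _]addn0 inD4. Qed.

Local Close Scope ring_scope.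

Definition Zp (m : nat) : bool := (0 < m) && ~~ inD (m.+1 %/ 2).
Definition cnt (m : nat) : nat := \sum_(k < m) Zp k.

Lemma cntS m : cnt m.+1 = cnt m + Zp m.
Proof. by rewrite /cnt big_ord_recr. Qed.

Lemma cnt_odd h : cnt (2 * h + 1) + 2 * R (h + 1) = 2 * (h + 1).
Proof.
elim: h => [|h IH]; first by rewrite /cnt /R big_ord1 big_ord1.
have -> : 2 * h.+1 + 1 = (2 * h + 1).+2 by lia.
rewrite !cntS.
have -> : h.+1 + 1 = (h + 1).+1 by lia.
rewrite RS.
have e1 : (2 * h + 1).+1 %/ 2 = h + 1 by lia.
have e2 : (2 * h + 1).+2 %/ 2 = h + 1 by lia.
rewrite /Zp e1 e2 /=. move: IH. case: (inD (h + 1)) => /=; lia.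
Qed.

Lemma inD_pair q : inD (2 * q + 3) = inD (2 * q + 2).
Proof.
have [e|e] : q = 2 * q./2 \/ q = 2 * q./2 + 1 by lia.
- have -> : 2 * q + 3 = 4 * q./2 + 3 by lia.
  have -> : 2 * q + 2 = 4 * q./2 + 2 by lia.
  by rewrite !inD4.
- have -> : 2 * q + 3 = 4 * (q./2 + 1) + 1 by lia.
  have -> : 2 * q + 2 = 4 * (q./2 + 1) + 0 by lia.
  by rewrite !inD4.
Qed.

Lemma Zp_block q r : r < 4 -> Zp (4 * q + 3 + r) = ~~ inD (2 * q + 2).
Proof.
move=> hr; rewrite /Zp.
have -> : 0 < 4 * q + 3 + r by lia.
case: r hr => [|[|[|[|r]]]] // _ /=.
- by have -> : (4 * q + 3 + 0).+1 %/ 2 = 2 * q + 2 by lia.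
- by have -> : (4 * q + 3 + 1).+1 %/ 2 = 2 * q + 2 by lia.
- have -> : (4 * q + 3 + 2).+1 %/ 2 = 2 * q + 3 by lia. by rewrite inD_pair.
- have -> : (4 * q + 3 + 3).+1 %/ 2 = 2 * q + 3 by lia. by rewrite inD_pair.
Qed.

Lemma R_2q2 q : R (2 * q + 2) = 2 * R (q./2 + 1).
Proof.
have [e|e] : q = 2 * q./2 \/ q = 2 * q./2 + 1 by lia.
- have -> : 2 * q + 2 = 4 * q./2 + 2 by lia.
  rewrite R4r //= addn1 RS; lia.
- have -> : 2 * q + 2 = 4 * (q./2 + 1) by lia.
  by rewrite R4.
Qed.

Lemma cnt_q q : cnt (4 * q + 3) + 4 * R (q./2 + 1) = 4 * q + 4.
Proof.
have := cnt_odd (2 * q + 1).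
have -> : 2 * (2 * q + 1) + 1 = 4 * q + 3 by lia.
have -> : 2 * q + 1 + 1 = 2 * q + 2 by lia.
rewrite R_2q2; lia.
Qed.

Section Enum.
Variable d : nat -> nat.
Hypothesis Hd : forall n, d n < d n.+1.
Hypothesis HZ : forall m, Zp m <-> exists n, d n = m.

Lemma d_mono i j : i <= j -> d i <= d j.
Proof.
move=> h; rewrite -(subnK h); elim: (j - i) => [|k IH] //=.
rewrite addSn; apply: leq_trans IH (ltnW (Hd _)).
Qed.

Lemma d_lt i j : d i < d j -> i < j.
Proof. move=> h; rewrite ltnNge; apply/negP => /d_mono; lia. Qed.

Lemma cnt_d n : cnt (d n) = n.
Proof.
elim: n => [|n IH].
  rewrite /cnt big1 // => k _; suff: ~~ Zp k by case: (Zp k).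
  apply/negP => /HZ [i ei].
  have := ltn_ord k; rewrite -ei => /d_lt; lia.
have cE m : cnt m = \sum_(0 <= k < m) Zp k by rewrite /cnt big_mkord.
rewrite cE (@big_cat_nat _ _ _ (d n)) /= ?(ltnW (Hd n)) //.
rewrite -cE IH big_ltn ?Hd //.
have -> : Zp (d n) by apply/HZ; exists n.
rewrite big_nat_cond big1 ?addn0 ?addn1 // => k /andP [/andP [h1 h2] _].
suff: ~~ Zp k by case: (Zp k).
apply/negP => /HZ [i ei]; subst k.
have := d_lt h1; have := d_lt h2; lia.
Qed.

Lemma d_of_cnt m k : Zp m -> cnt m = k -> d k = m.
Proof. by move=> /HZ [i <-]; rewrite cnt_d => ->. Qed.

Lemma d4n n : exists q, d (4 * n) = 4 * q + 3 /\ Zp (4 * q + 3) /\ cnt (4 * q + 3) = 4 * n.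
Proof.
have Zm : Zp (d (4 * n)) by apply/HZ; exists (4 * n).
have cm : cnt (d (4 * n)) = 4 * n by rewrite cnt_d.
move: Zm cm; move: (d (4 * n)) => m Zm cm.
have m3 : 3 <= m.
  move: Zm; clear cm; rewrite /Zp; case: m => [|[|[|m]]] //.
have [q [r [em hr]]] : exists q r, m = 4 * q + 3 + r /\ r < 4.
  by exists ((m - 3) %/ 4), ((m - 3) %% 4); lia.
subst m.
have Zi : ~~ inD (2 * q + 2) by rewrite -(Zp_block q hr).
have Zr : forall r', r' < 4 -> Zp (4 * q + 3 + r') by move=> r' h; rewrite Zp_block.
have z0 := Zr 0 isT; have z1 := Zr 1 isT; have z2 := Zr 2 isT.
rewrite addn0 in z0; rewrite addn1 in z1; rewrite addn2 in z2.
have hc := cnt_q q.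
have : cnt (4 * q + 3 + r) = cnt (4 * q + 3) + r.
  clear m3; case: r hr {cm Zm} => [|[|[|[|r]]]] // _.
  - by rewrite addn0 addn0.
  - by rewrite addn1 cntS z0.
  - by rewrite addn2 !cntS z0 z1; lia.
  - by rewrite addn3 !cntS z0 z1 z2; lia.
move=> hcr.
have r0 : r = 0 by lia.
subst r; exists q; rewrite addn0 in cm *; by [].
Qed.

End Enum.

Local Close Scope ring_scope.
Import GRing.Theory.

Section Z.
Variable d : nat -> nat.
Hypothesis Hd : forall n, d n < d n.+1.
Hypothesis HZ : forall m, Zp m <-> exists n, d n = m.

Lemma zseq_eq n q : d (4 * n) = 4 * q + 3 -> cnt (4 * q + 3) = 4 * n ->
  zseq d n = Posz (R (q./2 + 1) %% 2).
Proof.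
move=> E C; rewrite /zseq E.
have hc := cnt_q q.
have -> : (4 * q + 3 + 1) %/ 4 = n + R (q./2 + 1) by lia.
rewrite PoszD addrC addKr.
by rewrite modz_nat.
Qed.

Lemma z_nz n : zseq d n <> 0%R -> exists y, inD y /\ n = 8 * y - 2 * R y.
Proof.
have [q [E [Z C]]] := d4n Hd HZ n.
rewrite (zseq_eq E C) => h.
have : odd (R (q./2 + 1)).
  by apply/negP => /negP ho; apply: h; rewrite modn2 (negbTE ho).
move=> /R_odd [y [ey iy]].
have hc := cnt_q q.
have [e|e] : q = 2 * q./2 \/ q = 2 * q./2 + 1 by lia.
- exists y; split => //.
  have hR : R (q./2 + 1) = 2 * R y + 1.
    by rewrite ey R4r //= iy.
  have := R_le y. lia.
- exfalso; move: Z; rewrite -(addn0 (4 * q + 3)) Zp_block //.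
  have -> : 2 * q + 2 = 4 * (4 * y + 1) + 0 by lia.
  by rewrite !inD4 // iy.
Qed.

Lemma z_pow j : zseq d (2 ^ (j + 1) * (2 ^ (j + 2) - 1)) = 1%R.
Proof.
set x := 2 ^ j.
have e1 : 2 ^ (j + 1) = 2 * x by rewrite expnD mulnC.
have e2 : 2 ^ (j + 2) = 4 * x by rewrite expnD mulnC.
have e4 : 4 ^ j = x * x by rewrite -expnMn.
have x1 : 1 <= x by rewrite expn_gt0.
rewrite e1 e2.
set q := 8 * 4 ^ j.
have Zq : Zp (4 * q + 3).
  rewrite -(addn0 (4 * q + 3)) Zp_block //.
  have -> : 2 * q + 2 = 4 * (4 * 4 ^ j) + 2 by lia.
  by rewrite inD4.
have hq2 : q./2 + 1 = 4 * 4 ^ j + 1 by lia.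
have hR : R (q./2 + 1) = 2 * x + 1.
  by rewrite hq2 R4r //= R_pow inD_pow addn1.
have hc := cnt_q q.
have C : cnt (4 * q + 3) = 4 * (2 * x * (4 * x - 1)).
  rewrite hR in hc; move: hc; move: (cnt (4 * q + 3)) => K; rewrite /q e4; nia.
have E := d_of_cnt Hd HZ Zq C.
rewrite (zseq_eq E C) hR.
by have -> : (2 * x + 1) %% 2 = 1 by lia.
Qed.

End Z.

Local Close Scope ring_scope.
From Stdlib Require Import Classical.
Import GRing.Theory.

Lemma decomp y : 0 < y -> inD y -> exists v u, y = 4 ^ v * (4 * u + 1) /\ inD u.
Proof.
elim/ltn_ind: y => y IH y0 iy.
have ey : y = 4 * (y %/ 4) + y %% 4 by lia.
have hr : y %% 4 < 4 by lia.
move: iy; rewrite ey inD4 //.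
case: (ltnP 0 (y %% 4)) => h0.
- move=> /andP [r1 iu]. exists 0, (y %/ 4); split => //. rewrite expn0 mul1n. lia.
- move=> /andP [_ iu].
  have [v [u [e iu']]] : exists v u, y %/ 4 = 4 ^ v * (4 * u + 1) /\ inD u.
    apply: IH => //; lia.
  exists v.+1, u; split => //. rewrite expnS -mulnA -e. lia.
Qed.

Lemma R_pow4 v w : R (4 ^ v * w) = 2 ^ v * R w.
Proof. elim: v => [|v IH]; first by rewrite !mul1n. by rewrite !expnS -mulnA R4 IH mulnA. Qed.

Lemma pow2_odd a b X Y : odd X -> odd Y -> 2 ^ a * X = 2 ^ b * Y -> a = b.
Proof.
wlog h : a b X Y / a <= b.
  move=> W oX oY e; case: (leqP a b) => h; first exact: (W a b X Y h oX oY e).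
  by symmetry; apply: (W b a Y X (ltnW h) oY oX (esym e)).
move=> oX oY e.
have e' : 2 ^ a * X = 2 ^ a * (2 ^ (b - a) * Y) by rewrite mulnA -expnD subnKC.
move/eqP: e'; rewrite eqn_pmul2l ?expn_gt0 // => /eqP {}e.
have : odd X = odd (2 ^ (b - a) * Y) by rewrite e.
rewrite oddM oddX oX oY /= andbT orbF.
move=> hh; move: hh h; case: (b - a =P 0); [lia|by []].
Qed.

Lemma no_hit j k y : j < k -> inD y -> 2 ^ (k + 1) * (2 ^ (j + 2) - 1) <> 8 * y - 2 * R y.
Proof.
move=> jk iy.
case: (posnP y) => [->|y0].
  rewrite /R big_ord0 muln0 subn0.
  have h1 : 2 ^ 1 <= 2 ^ (j + 2) by rewrite leq_exp2l //; lia.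
  have h2 : 0 < 2 ^ (k + 1) by rewrite expn_gt0.
  move: h1 h2; rewrite expn1; move: (2 ^ (j + 2)) (2 ^ (k + 1)) => A B; nia.
have [v [u [ey iu]]] := decomp y0 iy.
have hR : R y = 2 ^ v * (2 * R u + 1).
  by rewrite ey R_pow4 R4r //= iu.
have Ru := R_le u.
set a := 2 ^ v.
have e4 : 4 ^ v = a * a by rewrite -expnMn.
have a1 : 1 <= a by rewrite expn_gt0.
have eB : 8 * y - 2 * R y = 2 ^ (v + 1) * (4 * a * (4 * u + 1) - 2 * R u - 1).
  rewrite hR ey e4 expnD -/a expn1. nia.
rewrite eB => e.
have oA : odd (2 ^ (j + 2) - 1).
  have : 0 < 2 ^ (j + 2) by rewrite expn_gt0.
  rewrite expnD => h; move: (2 ^ j) h => t h.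
  have -> : t * 2 ^ 2 - 1 = 2 * (2 * t - 1) + 1 by rewrite (_ : 2 ^ 2 = 4) //; lia.
  by rewrite oddD oddM.
have oB : odd (4 * a * (4 * u + 1) - 2 * R u - 1).
  have -> : 4 * a * (4 * u + 1) - 2 * R u - 1 = 2 * (2 * a * (4 * u + 1) - R u - 1) + 1 by nia.
  by rewrite oddD oddM.
have kv := pow2_odd oA oB e.
have kv' : k = v by lia.
subst v.
move: e => /eqP; rewrite eqn_pmul2l ?expn_gt0 // => /eqP e.
have ak : 2 * 2 ^ j <= a.
  rewrite /a -expnS leq_exp2l //.
move: e; rewrite expnD (_ : 2 ^ 2 = 4) //.
move: (2 ^ j) ak => t ak. nia.
Qed.

Lemma pigeon L (P : nat -> nat -> Prop) :
  (forall j, j <= L -> exists i, i < L /\ P j i) ->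
  exists j1 j2 i, j1 < j2 /\ P j1 i /\ P j2 i.
Proof.
elim: L P => [|L IH] P H.
  by have [i [hi _]] := H 0 (leqnn 0).
have [i0 [hi0 P0]] := H L.+1 (leqnn _).
case: (classic (exists j, j <= L /\ P j i0)) => [[j [hj Pj]]|N].
  by exists j, L.+1, i0; split => //; lia.
pose g i := if i < i0 then i else i.+1.
have := IH (fun j i => P j (g i)).
case.
  move=> j hj.
  have [i [hi Pi]] := H j (leq_trans hj (leqnSn _)).
  have ni : i != i0 by apply/eqP => ei; apply: N; exists j; split => //; rewrite -ei.
  exists (if i < i0 then i else i.-1); split.
    case: ifP => h; lia.
  rewrite /g; case: (ltnP i i0) => h; first by rewrite h /= ?h.
  have -> : (i.-1 < i0) = false by lia.
  by have -> : i.-1.+1 = i by lia.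
move=> j1 [j2 [i [h1 [p1 p2]]]].
by exists j1, j2, (g i).
Qed.

Section A.
Variable d : nat -> nat.
Hypothesis Hd : forall n, d n < d n.+1.
Hypothesis HZ : forall m, Zp m <-> exists n, d n = m.

Lemma not_auto : ~ automatic 2 (zseq d).
Proof.
move=> [s Hs].
have := @pigeon (size s) (fun j i => forall n, zseq d (2 ^ (j + 1) * n + 0) = nth (zseq d) s i n).
case.
  move=> j _.
  have [i hi Pi] := Hs (j + 1) 0 (expn_gt0 2 (j + 1)).
  by exists i.
move=> j1 [j2 [i [h12 [p1 p2]]]].
have := p1 (2 ^ (j1 + 2) - 1).
rewrite -p2 !addn0 z_pow //.
move=> e.
have : zseq d (2 ^ (j2 + 1) * (2 ^ (j1 + 2) - 1)) <> 0%R by rewrite -e.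
move/(z_nz Hd HZ) => [y [iy ey]].
exact: (no_hit h12 iy ey).
Qed.
End A.

Local Close Scope ring_scope.
Import GRing.Theory.
Local Open Scope ring_scope.

Notation F2 := 'F_2.
Notation PF := {poly 'F_2}.

Lemma two0 : (2%:R : F2) = 0. Proof. by apply/eqP. Qed.
Lemma two0P : (2%:R : PF) = 0. Proof. by rewrite -polyC_natr two0. Qed.
Lemma sqF2 (x : F2) : x * x = x.
Proof. apply/eqP. by case: x => [[|[|]]]. Qed.
Lemma dbl0 (z : PF) : z *+ 2 = 0.
Proof. by rewrite -mulr_natr two0P mulr0. Qed.
Lemma addpp (z : PF) : z + z = 0.
Proof. by rewrite -mulr2n dbl0. Qed.
Lemma oppP (z : PF) : - z = z.
Proof. by apply/eqP; rewrite -subr_eq0 -opprD addpp oppr0. Qed.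

Lemma sqrD2 (u v : PF) : (u + v) ^+ 2 = u ^+ 2 + v ^+ 2.
Proof. by rewrite sqrrD dbl0 addr0. Qed.

Lemma frob (p r : PF) : (p \Po r) ^+ 2 = p \Po (r ^+ 2).
Proof.
elim/poly_ind: p => [|p a IH]; first by rewrite !comp_poly0 expr2 mul0r.
rewrite !comp_poly_MXaddC sqrD2 exprMn IH.
by rewrite [a%:P ^+ 2]expr2 -polyCM sqF2.
Qed.

Lemma sqP (p : PF) : p ^+ 2 = p \Po 'X^2.
Proof. by rewrite -{1}(comp_polyXr p) frob. Qed.

Lemma dvdXnP (M : nat) (p : PF) : ('X^M %| p) <-> (forall i, (i < M)%N -> p`_i = 0).
Proof.
split.
- move=> /dvdpP [q ->] i hi. by rewrite coefMXn hi.
- move=> h. rewrite -(poly_take_drop M p).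
  have -> : take_poly M p = 0.
    apply/polyP => i; rewrite coef_take_poly coef0; case: ifP => // hi; exact: h.
  by rewrite add0r dvdp_mull.
Qed.

Lemma comp_dvd (M : nat) (E Q : PF) : 'X %| Q -> 'X^M %| E -> 'X^M %| E \Po Q.
Proof.
move=> /dvdpP [q ->] /dvdpP [k ->].
rewrite comp_polyM comp_Xn_poly exprMn.
by rewrite mulrA dvdp_mull.
Qed.

Lemma sq1X : (1 + 'X : PF) ^+ 2 = 1 + 'X^2.
Proof. by rewrite sqrD2 expr1n. Qed.

Lemma cube1X : (1 + 'X : PF) ^+ 3 = 1 + 'X + 'X^2 + 'X^3.
Proof.
rewrite exprS sq1X.
have -> : ('X^3 : PF) = 'X * 'X^2 by rewrite -exprS.
ring.
Qed.

Local Close Scope ring_scope.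
Import GRing.Theory.

Lemma s2E n K : n < K -> s2 n = \sum_(i < K) odd (n %/ 2 ^ i).
Proof.
elim: K => [|K IH] //; rewrite ltnS leq_eqVlt => /orP [/eqP <- //| h].
rewrite big_ord_recr /= -IH // divn_small ?addn0 //.
apply: ltn_trans h (ltn_expl _ _) => //.
Qed.

Lemma s2_double n : s2 (2 * n) = s2 n.
Proof.
case: n => [|n]; first by [].
rewrite [LHS]/s2 big_ord_recl expn0 divn1 oddM /=.
rewrite (@s2E n.+1 (2 * n.+1)); last by lia.
apply: eq_bigr => i _. by rewrite /bump /= expnS divnMl.
Qed.

Lemma s2_doubleS n : s2 (2 * n + 1) = (s2 n).+1.
Proof.
rewrite [LHS]/s2 big_ord_recl expn0 divn1 oddD oddM /=.
rewrite (@s2E n (2 * n + 1)); last by lia.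
rewrite add1n; congr (_.+1).
apply: eq_bigr => i _. rewrite /bump /= expnS divnMA.
by have -> : (2 * n + 1) %/ 2 = n by lia.
Qed.

Lemma tm2 n : tm (2 * n) = tm n.
Proof. by rewrite /tm s2_double. Qed.
Lemma tm2S n : tm (2 * n + 1) = ~~ tm n.
Proof. by rewrite /tm s2_doubleS. Qed.

Local Open Scope ring_scope.

Definition fT (j : nat) : F2 := ((0 < j)%N && tm j)%:R.

Lemma fT2 j : fT (2 * j) = fT j.
Proof. by rewrite /fT tm2; case: j. Qed.

Lemma tm0 : tm 0 = false.
Proof. by rewrite /tm /s2 big_ord1. Qed.

Lemma fT2S j : fT (2 * j + 1) = 1 + fT j.
Proof.
rewrite /fT tm2S.
have -> : (0 < 2 * j + 1)%N = true by lia.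
case: j => [|j] /=; first by rewrite tm0 /=; apply/eqP.
by case: (tm j.+1) => /=; apply/eqP.
Qed.

Lemma coefP N j : (j <= N)%N -> (Ftrunc N)`_j = fT j.
Proof. by move=> h; rewrite /Ftrunc coef_poly ltnS h. Qed.

Lemma coefS N j : (j <= N)%N -> (Ftrunc N \Po 'X^2)`_j = if odd j then 0 else fT j./2.
Proof.
move=> h; rewrite coef_comp_poly_Xn // dvdn2.
case: (odd j) => //=.
rewrite coefP ?divn2 //.
have : (j %/ 2 <= j)%N by apply: leq_div.
lia.
Qed.

Lemma odd2 x : odd (2 * x) = false. Proof. by rewrite oddM. Qed.
Lemma odd2S x : odd (2 * x + 1) = true. Proof. by rewrite oddD oddM. Qed.
Lemma half2 x : (2 * x)./2 = x. Proof. lia. Qed.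
Lemma half2S x : (2 * x + 1)./2 = x. Proof. lia. Qed.

Lemma TMid N k : (k <= N)%N ->
  ((1 + 'X + 'X^2 + 'X^3) * (Ftrunc N \Po 'X^2) + (1 + 'X^2) * Ftrunc N + 'X : PF)`_k = 0.
Proof.
move=> hk.
rewrite !mulrDl !mul1r !coefD coefXM !coefXnM coefX.
have tm1 : tm 1 = true by rewrite -[1%N]/(2*0+1)%N tm2S tm0.
case: k hk => [|[|k]] hk.
- rewrite /= coefS // coefP //= /fT /=. by rewrite !addr0.
- rewrite /= !coefS ?coefP //= /fT /= tm1 /= ?tm0 /=. rewrite !add0r !addr0. by apply/eqP.
- have [m [e|e]] : exists m, k = (2 * m)%N \/ k = (2 * m + 1)%N.
    exists k./2; lia.
  + subst k.
    have -> : ((2 * m).+2 < 2)%N = false by lia.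
    have -> : (if ((2 * m).+2 < 3)%N then 0 else (Ftrunc N \Po 'X^2)`_((2 * m).+2 - 3)) = 0.
      case: ifP => // h3.
      have -> : ((2 * m).+2 - 3)%N = (2 * (m - 1) + 1)%N by lia.
      rewrite coefS; [by rewrite oddD oddM | lia].
    have -> : ((2 * m).+2 - 2)%N = (2 * m)%N by lia.
    have -> : ((2 * m).+2).-1 = (2 * m + 1)%N by lia.
    have -> : (2 * m).+2 = (2 * m.+1)%N by lia.
    rewrite !coefS; try lia.
    rewrite !coefP; try lia.
    rewrite ?odd2 ?odd2S ?half2 ?half2S !fT2.
    have -> : (2 * m.+1 == 1)%N = false by lia.
    rewrite !addr0.
    have h2 : forall x : F2, x + x = 0 by move=> x; rewrite -mulr2n -mulr_natr two0 mulr0.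
    rewrite -!addrA [fT m + _]addrC !addrA h2 add0r h2.
    by [].
  + subst k.
    have -> : ((2 * m + 1).+2 < 2)%N = false by lia.
    have -> : ((2 * m + 1).+2 < 3)%N = false by lia.
    have -> : ((2 * m + 1).+2 - 2)%N = (2 * m + 1)%N by lia.
    have -> : ((2 * m + 1).+2 - 3)%N = (2 * m)%N by lia.
    have -> : ((2 * m + 1).+2).-1 = (2 * m.+1)%N by lia.
    have -> : (2 * m + 1).+2 = (2 * m.+1 + 1)%N by lia.
    rewrite !coefS; try lia.
    rewrite !coefP; try lia.
    rewrite ?odd2 ?odd2S ?half2 ?half2S ?fT2 ?fT2S.
    have -> : (2 * m.+1 + 1 == 1)%N = false by lia.
    rewrite !addr0 !add0r.
    have h2 : forall x : F2, x + x = 0 by move=> x; rewrite -mulr2n -mulr_natr two0 mulr0.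
    have -> : fT m.+1 + fT m + (1 + fT m.+1 + (1 + fT m)) = (fT m.+1 + fT m.+1) + (fT m + fT m) + (1 + 1) by ring.
    by rewrite !h2 ?addr0.
Qed.

Local Close Scope ring_scope.
Import GRing.Theory.
Local Open Scope ring_scope.

Lemma comp_exp (R0 : comNzRingType) (p q : {poly R0}) n : (p ^+ n) \Po q = (p \Po q) ^+ n.
Proof.
elim: n => [|n IH]; first by rewrite !expr0 comp_polyC.
by rewrite !exprS comp_polyM IH.
Qed.

Lemma cube_c c N : is_comp_inverse_of_TM c ->
  'X^(N.+2) %| (1 + 'X + 'X * Gtrunc c N) ^+ 3 - (1 + 'X).
Proof.
move=> [c0 H].
set P := Ftrunc N; set Q := Gtrunc c N; set W := P \Po Q.
have hW : 'X^(N.+1) %| W - 'X.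
  apply/dvdXnP => i hi; rewrite coefB coefX.
  have [h1 _] := H N i (hi : (i <= N)%N).
  by rewrite /W h1 subrr.
have hE : 'X^(N.+1) %| (1 + 'X) ^+ 3 * P ^+ 2 + (1 + 'X) ^+ 2 * P + 'X.
  apply/dvdXnP => i hi; rewrite cube1X sq1X [P ^+ 2]sqP.
  exact: TMid.
have hQ : 'X %| Q.
  rewrite -(expr1 'X); apply/dvdXnP => i; rewrite ltnS leqn0 => /eqP ->.
  by rewrite /Q /Gtrunc coef_poly.
have hEQ := comp_dvd hQ hE.
have {}hEQ : 'X^(N.+1) %| (1 + Q) ^+ 3 * W ^+ 2 + (1 + Q) ^+ 2 * W + Q.
  suff <- : ((1 + 'X) ^+ 3 * P ^+ 2 + (1 + 'X) ^+ 2 * P + 'X) \Po Q =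
    (1 + Q) ^+ 3 * W ^+ 2 + (1 + Q) ^+ 2 * W + Q by [].
  rewrite !(comp_polyD, comp_polyM, comp_polyX, comp_polyC) /W; ring.
set Y := (1 + Q) ^+ 3 * 'X ^+ 2 + (1 + Q) ^+ 2 * 'X + Q.
have eY : Y = ((1 + Q) ^+ 3 * W ^+ 2 + (1 + Q) ^+ 2 * W + Q)
   - (W - 'X) * ((1 + Q) ^+ 3 * (W + 'X) + (1 + Q) ^+ 2) by rewrite /Y; ring.
have hY : 'X^(N.+1) %| Y.
  by rewrite eY dvdp_sub // dvdp_mulr.
have -> : (1 + 'X + 'X * Q) ^+ 3 - (1 + 'X) = 'X * Y
    + 2%:R * (('X + 'X * Q) ^+ 2 + ('X + 'X * Q)) by rewrite /Y; ring.
by rewrite two0P mul0r addr0 exprS dvdp_mul.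
Qed.

Fixpoint Phi (K : nat) : PF := if K is K'.+1 then (1 + 'X) * (Phi K' \Po 'X^4) else 1.

Lemma pow4 : (1 + 'X : PF) ^+ 4 = 1 + 'X^4.
Proof.
have -> : (1 + 'X : PF) ^+ 4 = ((1 + 'X) ^+ 2) ^+ 2 by rewrite -exprM.
by rewrite sq1X sqrD2 expr1n -exprM.
Qed.

Lemma Phi_cube K : (1 + 'X) * Phi K ^+ 3 = 1 + 'X^(4 ^ K).
Proof.
elim: K => [|K IH]; first by rewrite expr1n mulr1 expn0 expr1.
rewrite /= exprMn mulrA -exprS pow4.
have -> : (1 + 'X^4 : PF) = (1 + 'X) \Po 'X^4 by rewrite comp_polyD comp_polyX comp_polyC.
rewrite -comp_exp -comp_polyM IH comp_polyD comp_polyC comp_Xn_poly -exprM expnS.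
by rewrite mulnC.
Qed.

Lemma Z_cube K : ((1 + 'X) * (Phi K \Po 'X^2)) ^+ 3 = (1 + 'X) * (1 + 'X^(2 * 4 ^ K)).
Proof.
rewrite exprMn exprS -mulrA sq1X.
have -> : (1 + 'X^2 : PF) = (1 + 'X) \Po 'X^2 by rewrite comp_polyD comp_polyX comp_polyC.
rewrite -comp_exp -comp_polyM Phi_cube comp_polyD comp_polyC comp_Xn_poly -exprM.
by [].
Qed.

Lemma Phi0 K : (Phi K).[0] = 1.
Proof.
elim: K => [|K IH]; first by rewrite hornerC.
by rewrite /= hornerM horner_comp hornerXn expr0n /= IH hornerD hornerC hornerX addr0 mulr1.
Qed.

Lemma Phi_coef K j : (Phi K)`_j = ((j < 4 ^ K)%N && inD j)%:R.
Proof.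
elim: K j => [|K IH] j.
  rewrite /= coef1 expn0; case: j => [|j] //.
rewrite /= mulrDl mul1r coefD coefXM !coef_comp_poly_Xn //.
have -> : j = (4 * (j %/ 4) + j %% 4)%N by lia.
have : (j %% 4 < 4)%N by lia.
move: (j %/ 4)%N (j %% 4)%N => y r hr.
rewrite inD4 // expnS.
have hlt : ((4 * y + r) < 4 * 4 ^ K)%N = (y < 4 ^ K)%N by lia.
rewrite hlt; clear hlt.
case: r hr => [|[|[|[|r]]]] // _.
- have -> : (4 %| 4 * y + 0)%N by lia.
  have -> : ((4 * y + 0) %/ 4)%N = y by lia.
  case: y => [|y]; first by rewrite /= addr0 IH.
  have -> : (4 * y.+1 + 0 == 0)%N = false by lia.
  have -> : (4 %| (4 * y.+1 + 0).-1)%N = false by lia.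
  by rewrite addr0 IH.
- have -> : (4 %| 4 * y + 1)%N = false by lia.
  have -> : (4 * y + 1 == 0)%N = false by lia.
  have -> : (4 %| (4 * y + 1).-1)%N by lia.
  have -> : ((4 * y + 1).-1 %/ 4)%N = y by lia.
  by rewrite add0r IH.
- have -> : (4 %| 4 * y + 2)%N = false by lia.
  have -> : (4 * y + 2 == 0)%N = false by lia.
  have -> : (4 %| (4 * y + 2).-1)%N = false by lia.
  by rewrite addr0 andbF.
- have -> : (4 %| 4 * y + 3)%N = false by lia.
  have -> : (4 * y + 3 == 0)%N = false by lia.
  have -> : (4 %| (4 * y + 3).-1)%N = false by lia.
  by rewrite addr0 andbF.
Qed.

Local Close Scope ring_scope.
Import GRing.Theory.
Local Open Scope ring_scope.

Lemma cube_uniq L (A B : PF) : A.[0] = 1 -> B.[0] = 1 ->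
  'X^L %| A ^+ 3 - (1 + 'X) -> 'X^L %| B ^+ 3 - (1 + 'X) -> 'X^L %| A - B.
Proof.
move=> a0 b0 hA hB.
have hAB : 'X^L %| (A - B) * (A ^+ 2 + A * B + B ^+ 2).
  have -> : (A - B) * (A ^+ 2 + A * B + B ^+ 2) = (A ^+ 3 - (1 + 'X)) - (B ^+ 3 - (1 + 'X)) by ring.
  exact: dvdp_sub.
have cop : coprimep ('X^L) (A ^+ 2 + A * B + B ^+ 2).
  apply: coprimep_expl; rewrite coprimep_sym.
  have -> : ('X : PF) = 'X - 0%:P by rewrite subr0.
  rewrite coprimep_XsubC rootE !hornerE a0 b0.
  by [].
by rewrite Gauss_dvdpl in hAB.
Qed.

Lemma c_char c : is_comp_inverse_of_TM c -> forall n, (0 < n)%N -> c n = (inD (n.+1 %/ 2))%:R.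
Proof.
move=> H N N0.
set A := 1 + 'X + 'X * Gtrunc c N.
set B := (1 + 'X) * (Phi N \Po 'X^2).
have hA := cube_c N H.
have hB : 'X^(N.+2) %| B ^+ 3 - (1 + 'X).
  rewrite /B Z_cube.
  have -> : (1 + 'X) * (1 + 'X^(2 * 4 ^ N)) - (1 + 'X) = (1 + 'X) * 'X^(2 * 4 ^ N) :> PF by ring.
  apply: dvdp_mull; apply: dvdp_exp2l.
  have : (N < 4 ^ N)%N by apply: ltn_expl.
  lia.
have a0 : A.[0] = 1 by rewrite /A !hornerE.
have b0 : B.[0] = 1 by rewrite /B hornerM horner_comp hornerXn expr0n /= Phi0 !hornerE.
have hAB := cube_uniq a0 b0 hA hB.
have := (proj1 (dvdXnP _ _) hAB) N.+1 (ltnSn _).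
rewrite coefB /A /B !coefD coef1 coefX coefXM /Gtrunc coef_poly ltnSn /=.
rewrite mulrDl mul1r coefD coefXM /= !coef_comp_poly_Xn // !Phi_coef.
rewrite add0r.
have hb : forall i, (i <= N.+1)%N -> (i %/ 2 < 4 ^ N)%N.
  move=> i hi; have : (N < 4 ^ N)%N by apply: ltn_expl.
  lia.
rewrite !hb ?leqnSn // /=.
have -> : (N.+1 == 1)%N = false by lia.
rewrite add0r.
move/eqP; rewrite subr_eq0 => /eqP ->.
rewrite !dvdn2 /=.
case: (boolP (odd N)) => ho /=.
- by rewrite addr0.
- by rewrite add0r; have -> : (N.+1 %/ 2)%N = (N %/ 2)%N by lia.
Qed.


Theorem mainTheorem14 (c : nat -> 'F_2) (d : nat -> nat) :
  is_comp_inverse_of_TM c ->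
  is_increasing_enum_of_zeros c d ->
  ~ automatic 2 (zseq d).
Proof.
move=> H [Hd He].
have Hc := c_char H.
apply: (not_auto Hd).
move=> m; split.
- move=> /andP [m0 hi]; apply/He; split => //.
  by rewrite Hc // (negbTE hi).
- move=> /He [m0 cm]; apply/andP; split => //.
  move: cm; rewrite Hc //; case: (inD _) => //= /eqP; by rewrite oner_eq0.
Qed.
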